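(* Let $\gamma:J\to{\rm AdS}$ be a stationary curve of the LIEN flow, with evolution $(s,t)\mapsto A(t)\gamma(s+2\ell t)B(t)^{-1}$ for some $\ell\in\mathbb{R}$. Then its bending $\kappa$ satisfies $$\kappa'''+2\ell\kappa'-6\kappa\kappa'=0,$$ and the bending of its evolution is the traveling wave $\kappa(s+2\ell t)$, a solution of the KdV equation $\partial_t\kappa+\partial_s^3\kappa-6\kappa\partial_s\kappa=0$.
   Context: ${\rm AdS}={\rm SL}(2,\mathbb{R})$ with the metric induced by the polarization of $q(X)=-\det X$. Null curves are future-directed, without inflection points, parametrized by proper time ($\langle\gamma'',\gamma''\rangle=4$), with bending $\kappa=-\frac1{16}\langle\gamma''',\gamma'''\rangle$, $T=\gamma'/\sqrt2$, $B=\frac1{\sqrt2}\kappa\gamma'-\frac1{2\sqrt2}\gamma'''$. The LIEN flow is $\partial_t\gamma=-2\sqrt2(\kappa T+2B)$ for families $\gamma(s,t)$ of such curves. A null curve $\gamma$ is a stationary curve of the LIEN flow if its evolution by the flow (the solution with initial condition $\gamma$) is $(s,t)\mapsto A(t)\gamma(s+2\ell t)B(t)^{-1}$ for some $\ell\in\mathbb{R}$ and smooth $A,B:I\to{\rm SL}(2,\mathbb{R})$ with $A(0)=B(0)=I_2$. A prime denotes $d/ds$. *)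

(* Defs.v *)
(* AdS = SL(2,R) inside 'M[R]_2. *)
From HB Require Import structures.
From mathcomp Require Import all_boot all_order all_algebra.
From mathcomp Require Import all_classical all_reals all_analysis.
Set Implicit Arguments. Unset Strict Implicit. Unset Printing Implicit Defensive.
Import Order.TTheory GRing.Theory Num.Theory.
Import numFieldNormedType.Exports.
Local Open Scope classical_set_scope.
Local Open Scope ring_scope.

Section AdS.
Variable R : realType.
Notation M2 := 'M[R]_2.

Definition adsq (X : M2) : R := - \det X.
Definition ads_ip (X Y : M2) : R := (adsq (X + Y) - adsq X - adsq Y) / 2.

Definition in_AdS (X : M2) : Prop := \det X = 1.

(* time orientation: the timelike left(=right)-invariant field p |-> p *m J0 *)
Definition J0 : M2 := \matrix_(i < 2, j < 2)
  (if (i == 0) && (j == 1) then -1 else if (i == 1) && (j == 0) then 1 else 0).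

Definition future_directed (p v : M2) : Prop := ads_ip v (p *m J0) < 0.

Definition dn (n : nat) (f : R -> M2) : R -> M2 := derive1n n f.

Definition smooth_at (f : R -> M2) (x : R) : Prop :=
  forall n, derivable (dn n f) x 1.
Definition rsmooth_at (f : R -> R) (x : R) : Prop :=
  forall n, derivable (derive1n n f) x 1.

Definition no_inflection_at (g : R -> M2) (s : R) : Prop :=
  forall a b : R, a *: dn 1 g s + b *: dn 2 g s = 0 -> a = 0 /\ b = 0.

(* null curve in AdS on the set J, future directed, without inflection
   points, parametrized by proper time *)
Definition null_curve (J : set R) (g : R -> M2) : Prop :=
  forall s, J s ->
    smooth_at g s /\ in_AdS (g s) /\
    ads_ip (dn 1 g s) (dn 1 g s) = 0 /\
    future_directed (g s) (dn 1 g s) /\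
    no_inflection_at g s /\
    ads_ip (dn 2 g s) (dn 2 g s) = 4.

Definition bending (g : R -> M2) (s : R) : R :=
  - (1 / 16) * ads_ip (dn 3 g s) (dn 3 g s).

Definition frameT (g : R -> M2) (s : R) : M2 :=
  (Num.sqrt 2)^-1 *: dn 1 g s.
Definition frameB (g : R -> M2) (s : R) : M2 :=
  ((Num.sqrt 2)^-1 * bending g s) *: dn 1 g s
  - (2 * Num.sqrt 2)^-1 *: dn 3 g s.

Definition lien_velocity (g : R -> M2) (s : R) : M2 :=
  (- (2 * Num.sqrt 2)) *: (bending g s *: frameT g s + 2 *: frameB g s).

Definition open_itv (a b : \bar R) : set R := [set x | (a < x%:E < b)%E].

Definition in_SL2 (A : M2) : Prop := \det A = 1.

Definition evolution (g : R -> M2) (l : R) (A B : R -> M2) (s t : R) : M2 :=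
  A t *m g (s + 2 * l * t) *m invmx (B t).

Definition stationary_LIEN (J I : set R) (g : R -> M2) (l : R) (A B : R -> M2) : Prop :=
  null_curve J g /\
  I 0 /\
  (forall t, I t -> smooth_at A t /\ smooth_at B t /\ in_SL2 (A t) /\ in_SL2 (B t)) /\
  A 0 = 1%:M /\ B 0 = 1%:M /\
  (forall t, I t -> null_curve J (fun s => evolution g l A B s t)) /\
  (forall s t, J s -> I t ->
        derivable (fun t => evolution g l A B s t) t 1 /\
        derive1 (fun t => evolution g l A B s t) t
          = lien_velocity (fun s => evolution g l A B s t) s).

End AdS.

(* Main.v *)
Require Import Defs.
From HB Require Import structures.
From mathcomp Require Import all_boot all_order all_algebra.
From mathcomp Require Import all_classical all_reals all_analysis.
From mathcomp Require Import ring lra.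
Import Order.TTheory GRing.Theory Num.Theory.
Import numFieldNormedType.Exports.
Local Open Scope classical_set_scope.
Local Open Scope ring_scope.
Set Implicit Arguments. Unset Strict Implicit. Unset Printing Implicit Defensive.

Section Alg.
Variable R : realType.
Notation M2 := 'M[R]_2.

Lemma o2w : widen_ord (leqnSn 1) ord_max = 0 :> 'I_2. Proof. exact/val_inj. Qed.
Lemma o2m : ord_max = 1 :> 'I_2. Proof. exact/val_inj. Qed.
Lemma o2l0 : lift (0 : 'I_2) (0 : 'I_1) = 1. Proof. exact/val_inj. Qed.
Lemma o2l1 : lift (1 : 'I_2) (0 : 'I_1) = 0. Proof. exact/val_inj. Qed.

Lemma ord2 (i : 'I_2) : i = 0 \/ i = 1.
Proof. by case: i => [[|[|//]] Hi]; [left|right]; apply/val_inj. Qed.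

Lemma mx2P (X Y : M2) : X 0 0 = Y 0 0 -> X 0 1 = Y 0 1 -> X 1 0 = Y 1 0 ->
  X 1 1 = Y 1 1 -> X = Y.
Proof.
move=> *; apply/matrixP => i j.
by case: (ord2 i) => ->; case: (ord2 j) => ->.
Qed.

Lemma addm2 (X Y : M2) i j : (X + Y) i j = X i j + Y i j.
Proof. by rewrite mxE. Qed.
Lemma subm2 (X Y : M2) i j : (X - Y) i j = X i j - Y i j.
Proof. by rewrite !mxE. Qed.
Lemma oppm2 (X : M2) i j : (- X) i j = - X i j.
Proof. by rewrite mxE. Qed.
Lemma scalm2 (k : R) (X : M2) i j : (k *: X) i j = k * X i j.
Proof. by rewrite mxE. Qed.

Lemma mulmx2E (X Y : M2) i j : (X *m Y) i j = X i 0 * Y 0 j + X i 1 * Y 1 j.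
Proof. by rewrite mxE !big_ord_recr big_ord0 /= add0r o2w o2m. Qed.

Lemma det2 (X : M2) : \det X = X 0 0 * X 1 1 - X 0 1 * X 1 0.
Proof.
rewrite (expand_det_row _ 0) !big_ord_recr big_ord0 /= add0r.
rewrite /cofactor !det_mx11 !mxE /= o2w o2m o2l0 o2l1.
rewrite expr0 expr1; ring.
Qed.

Lemma adj2 (X : M2) : \adj X = \matrix_(i < 2, j < 2)
  (if i == 0 then (if j == 0 then X 1 1 else - X 0 1)
   else (if j == 0 then - X 1 0 else X 0 0)).
Proof.
apply/matrixP => i j; rewrite !mxE /cofactor det_mx11 !mxE.
case: i => [[|[|//]] Hi]; case: j => [[|[|//]] Hj] /=.
- by rewrite expr0 mul1r; congr (X _ _); apply/val_inj.
- by rewrite expr1 mulN1r; congr (- X _ _); apply/val_inj.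
- by rewrite expr1 mulN1r; congr (- X _ _); apply/val_inj.
- by rewrite sqrrN expr1n mul1r; congr (X _ _); apply/val_inj.
Qed.

Lemma ipE (X Y : M2) : ads_ip X Y =
  - (X 0 0 * Y 1 1 + X 1 1 * Y 0 0 - X 0 1 * Y 1 0 - X 1 0 * Y 0 1) / 2.
Proof. by rewrite /ads_ip /adsq !det2 !mxE; congr (_ / 2); ring. Qed.

Definition cf (X : M2) (j : 'I_4) : R :=
  match val j with 0 => X 0 0 | 1 => X 0 1 | 2 => X 1 0 | _ => X 1 1 end.
Definition df (X : M2) (j : 'I_4) : R :=
  match val j with 0 => - X 1 1 / 2 | 1 => X 1 0 / 2 | 2 => X 0 1 / 2
   | _ => - X 0 0 / 2 end.

Lemma sum4 (F : 'I_4 -> R) : \sum_j F j = F 0 + F 1 + F 2 + F 3.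
Proof.
rewrite !big_ord_recr big_ord0 /= add0r.
by congr (_ + _ + _ + _); congr F; apply/val_inj.
Qed.

Lemma ipcf X Z : ads_ip X Z = \sum_j cf Z j * df X j.
Proof. rewrite sum4 ipE /cf /df /= !mulrA; by field. Qed.

Definition ev (e0 e1 e2 e3 : M2) (i : 'I_4) : M2 :=
  match val i with 0 => e0 | 1 => e1 | 2 => e2 | _ => e3 end.

Lemma nondeg4 (e0 e1 e2 e3 Y : M2) (k : R) :
  ads_ip e0 e0 = -1 -> ads_ip e0 e1 = 0 -> ads_ip e0 e2 = 0 -> ads_ip e0 e3 = 0 ->
  ads_ip e1 e1 = 0 -> ads_ip e1 e2 = 0 -> ads_ip e1 e3 = -4 ->
  ads_ip e2 e2 = 4 -> ads_ip e2 e3 = 0 -> ads_ip e3 e3 = k ->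
  ads_ip Y e0 = 0 -> ads_ip Y e1 = 0 -> ads_ip Y e2 = 0 -> ads_ip Y e3 = 0 ->
  Y = 0.
Proof.
move=> h00 h01 h02 h03 h11 h12 h13 h22 h23 h33 y0 y1 y2 y3.
have sym (X Z : M2) : ads_ip X Z = ads_ip Z X by rewrite !ipE; ring.
pose E : 'M[R]_4 := \matrix_(i, j) cf (ev e0 e1 e2 e3 i) j.
pose D : 'M[R]_4 := \matrix_(j, i) df (ev e0 e1 e2 e3 i) j.
pose Gi : 'M[R]_4 := \matrix_(i, j)
  (match val i, val j with
   | 0, 0 => -1 | 1, 1 => - k / 16 | 1, 3 => - 1/4 | 3, 1 => -1/4
   | 2, 2 => 1/4 | _, _ => 0 end).
have ED : E *m (D *m Gi) = 1%:M.
  have ED1 : E *m D = \matrix_(i, j) ads_ip (ev e0 e1 e2 e3 j) (ev e0 e1 e2 e3 i).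
    by apply/matrixP => i j; rewrite !mxE ipcf; apply: eq_bigr => l _; rewrite !mxE.
  rewrite mulmxA ED1; apply/matrixP => i j; rewrite mxE sum4 !mxE.
  case: i => [[|[|[|[|//]]]] Hi]; case: j => [[|[|[|[|//]]]] Hj] /=;
  rewrite /ev /= ?(sym e1 e0) ?(sym e2 e0) ?(sym e3 e0) ?(sym e2 e1) ?(sym e3 e1)
    ?(sym e3 e2) ?h00 ?h01 ?h02 ?h03 ?h11 ?h12 ?h13 ?h22 ?h23 ?h33 ?mxE /=; by field.
have [Eu _] := mulmx1_unit ED.
pose w : 'cV[R]_4 := \col_j df Y j.
have Ew : E *m w = 0.
  apply/matrixP => i j; rewrite !mxE; under eq_bigr do rewrite !mxE; rewrite -ipcf.
  case: i => [[|[|[|[|//]]]] Hi] /=; rewrite /ev /=; by [rewrite y0|rewrite y1|rewrite y2|rewrite y3].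
have w0 : w = 0 by rewrite -(mulKmx Eu w) Ew mulmx0.
have wj j : df Y j = 0 by have := congr1 (fun M : 'cV[R]_4 => M j 0) w0; rewrite !mxE.
have := wj 0; have := wj 1; have := wj 2; have := wj 3; rewrite /df /= => a b c d.
by apply: mx2P; rewrite mxE; lra.
Qed.

Lemma ip_sym (X Y : M2) : ads_ip X Y = ads_ip Y X.
Proof. by rewrite !ipE; congr (_ / _); ring. Qed.

Lemma ipXX (X : M2) : ads_ip X X = - \det X.
Proof. by rewrite ipE det2; field. Qed.

Lemma ip_inv (A C X Y : M2) : \det A = 1 -> \det C = 1 ->
  ads_ip (A *m X *m C) (A *m Y *m C) = ads_ip X Y.
Proof.
move=> dA dC; rewrite /ads_ip /adsq -mulmxDl -mulmxDr !det_mulmx dA dC.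
by rewrite !(mul1r, mulr1).
Qed.

Lemma tr2 (X : M2) : \tr X = X 0 0 + X 1 1.
Proof. by rewrite /mxtrace !big_ord_recr big_ord0 /= add0r o2w o2m. Qed.

Lemma killing (a b X : M2) : \tr a + \tr b = 0 -> ads_ip (a *m X + X *m b) X = 0.
Proof.
rewrite !tr2 => h; rewrite ipE !addm2 !mulmx2E.
have -> : b 1 1 = - a 0 0 - a 1 1 - b 0 0 by lra.
rewrite -mulNr; apply/eqP; rewrite mulf_eq0; apply/orP; left.
apply/eqP; ring.
Qed.

Lemma adj_det1 (B : M2) : \det B = 1 -> invmx B = \adj B.
Proof.
move=> dB; rewrite /invmx unitmxE dB unitr1 invr1 scale1r //.
Qed.

Lemma sqrt2_neq0 : Num.sqrt (2 : R) != 0.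
Proof. by rewrite sqrtr_eq0 -ltNge ltr0n. Qed.

Lemma lienE (F : R -> M2) s : lien_velocity F s =
  2 *: dn 3 F s - (6 * bending F s) *: dn 1 F s.
Proof.
rewrite /lien_velocity /frameT /frameB.
have h := sqrt2_neq0.
apply/matrixP => i j; rewrite !mxE; field; rewrite h //.
Qed.
End Alg.


Section Ana.
Variable R : realType.
Notation M2 := 'M[R]_2.
Implicit Types f g : R -> R.

Lemma dC (k : R) x : derivable (fun _ : R => k) x 1 /\ derive1 (fun _ : R => k) x = 0.
Proof. split; [exact: derivable_cst | exact: derive1_cst]. Qed.

Lemma dI x : derivable (fun z : R => z) x 1 /\ derive1 (fun z : R => z) x = 1.
Proof. split; [exact: derivable_id | by rewrite derive1E derive_id]. Qed.

Lemma dD f g x : derivable f x 1 -> derivable g x 1 ->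
  derivable (fun z => f z + g z) x 1 /\
  derive1 (fun z => f z + g z) x = derive1 f x + derive1 g x.
Proof.
move=> hf hg; have -> : (fun z => f z + g z) = f + g by [].
by rewrite !derive1E; split; [exact: derivableD | exact: deriveD].
Qed.

Lemma dN f x : derivable f x 1 ->
  derivable (fun z => - f z) x 1 /\ derive1 (fun z => - f z) x = - derive1 f x.
Proof.
move=> hf; have -> : (fun z => - f z) = - f by [].
by rewrite !derive1E; split; [exact: derivableN | exact: deriveN].
Qed.

Lemma dM f g x : derivable f x 1 -> derivable g x 1 ->
  derivable (fun z => f z * g z) x 1 /\
  derive1 (fun z => f z * g z) x = derive1 f x * g x + f x * derive1 g x.
Proof.
move=> hf hg; have -> : (fun z => f z * g z) = f * g by [].
rewrite !derive1E; split; first exact: derivableM.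
by rewrite deriveM // addrC; congr (_ + _); exact: mulrC.
Qed.


Lemma dZ (k : R) f x : derivable f x 1 ->
  derivable (fun z => k * f z) x 1 /\ derive1 (fun z => k * f z) x = k * derive1 f x.
Proof.
move=> hf; have [h1 h2] := dM (dC k x).1 hf.
by split => //; rewrite h2 (dC k x).2 mul0r add0r.
Qed.

Lemma dB f g x : derivable f x 1 -> derivable g x 1 ->
  derivable (fun z => f z - g z) x 1 /\
  derive1 (fun z => f z - g z) x = derive1 f x - derive1 g x.
Proof.
move=> hf hg; have [n1 n2] := dN hg; have [d1 d2] := dD hf n1.
by split => //; rewrite d2 n2.
Qed.

Lemma mE (F : R -> M2) x : derivable F x 1 -> forall i j,
  derivable (fun z => F z i j) x 1 /\ derive1 (fun z => F z i j) x = derive1 F x i j.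
Proof.
move=> hF i j; split; first by move/derivable_mxP: hF.
by rewrite !derive1E (derive_mx hF) mxE.
Qed.

Lemma mB (F : R -> M2) x (D : M2) : (forall i j,
  derivable (fun z => F z i j) x 1 /\ derive1 (fun z => F z i j) x = D i j) ->
  derivable F x 1 /\ derive1 F x = D.
Proof.
move=> h.
have hF : derivable F x 1 by apply/derivable_mxP => i j; exact: (h i j).1.
split => //; apply/matrixP => i j; rewrite -(mE hF i j).2; exact: (h i j).2.
Qed.

Lemma near_der1 (V : normedModType R) (f g : R -> V) x :
  (\forall z \near x, f z = g z) -> derive1 f x = derive1 g x.
Proof. by move=> h; rewrite !derive1E; apply: near_eq_derive. Qed.

Lemma near_dble (V : normedModType R) (f g : R -> V) x :
  (\forall z \near x, f z = g z) -> derivable f x 1 -> derivable g x 1.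
Proof. by move=> h; apply: near_eq_derivable; near=> z; apply: (near h). Unshelve. all: by end_near. Qed.

Lemma mMul (F G : R -> M2) x : derivable F x 1 -> derivable G x 1 ->
  derivable (fun z => F z *m G z) x 1 /\
  derive1 (fun z => F z *m G z) x = derive1 F x *m G x + F x *m derive1 G x.
Proof.
move=> hF hG; apply: mB => i j.
have -> : (fun z => (F z *m G z) i j) =
  (fun z => F z i 0 * G z 0 j + F z i 1 * G z 1 j).
  by apply/funext => z; rewrite mulmx2E.
have [a1 a2] := dM (mE hF i 0).1 (mE hG 0 j).1.
have [b1 b2] := dM (mE hF i 1).1 (mE hG 1 j).1.
have [c1 c2] := dD a1 b1.
split => //; rewrite c2 a2 b2 addm2 !mulmx2E (mE hF i 0).2 (mE hF i 1).2
  (mE hG 0 j).2 (mE hG 1 j).2; ring.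
Qed.

Lemma mAdd (F G : R -> M2) x : derivable F x 1 -> derivable G x 1 ->
  derivable (fun z => F z + G z) x 1 /\
  derive1 (fun z => F z + G z) x = derive1 F x + derive1 G x.
Proof.
move=> hF hG; apply: mB => i j.
have -> : (fun z => (F z + G z) i j) = (fun z => F z i j + G z i j).
  by apply/funext => z; rewrite addm2.
have [c1 c2] := dD (mE hF i j).1 (mE hG i j).1.
by split => //; rewrite c2 addm2 (mE hF i j).2 (mE hG i j).2.
Qed.

Lemma mSub (F G : R -> M2) x : derivable F x 1 -> derivable G x 1 ->
  derivable (fun z => F z - G z) x 1 /\
  derive1 (fun z => F z - G z) x = derive1 F x - derive1 G x.
Proof.
move=> hF hG; apply: mB => i j.
have -> : (fun z => (F z - G z) i j) = (fun z => F z i j - G z i j).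
  by apply/funext => z; rewrite subm2.
have [c1 c2] := dB (mE hF i j).1 (mE hG i j).1.
by split => //; rewrite c2 subm2 (mE hF i j).2 (mE hG i j).2.
Qed.

Lemma mScal (k : R -> R) (F : R -> M2) x : derivable k x 1 -> derivable F x 1 ->
  derivable (fun z => k z *: F z) x 1 /\
  derive1 (fun z => k z *: F z) x = derive1 k x *: F x + k x *: derive1 F x.
Proof.
move=> hk hF; apply: mB => i j.
have -> : (fun z => (k z *: F z) i j) = (fun z => k z * F z i j).
  by apply/funext => z; rewrite scalm2.
have [c1 c2] := dM hk (mE hF i j).1.
by split => //; rewrite c2 addm2 !scalm2 (mE hF i j).2.
Qed.

Lemma mConst (C : M2) x : derivable (fun _ : R => C) x 1 /\
  derive1 (fun _ : R => C) x = 0.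
Proof. split; [exact: derivable_cst | exact: derive1_cst]. Qed.

Lemma mip (F G : R -> M2) x : derivable F x 1 -> derivable G x 1 ->
  derivable (fun z => ads_ip (F z) (G z)) x 1 /\
  derive1 (fun z => ads_ip (F z) (G z)) x =
    ads_ip (derive1 F x) (G x) + ads_ip (F x) (derive1 G x).
Proof.
move=> hF hG.
have -> : (fun z => ads_ip (F z) (G z)) = (fun z =>
  (- (1/2)) * (F z 0 0 * G z 1 1 + F z 1 1 * G z 0 0 - F z 0 1 * G z 1 0
     - F z 1 0 * G z 0 1)).
  by apply/funext => z; rewrite ipE; field.
have [a1 a2] := dM (mE hF 0 0).1 (mE hG 1 1).1.
have [b1 b2] := dM (mE hF 1 1).1 (mE hG 0 0).1.
have [c1 c2] := dM (mE hF 0 1).1 (mE hG 1 0).1.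
have [d1 d2] := dM (mE hF 1 0).1 (mE hG 0 1).1.
have [e1 e2] := dD a1 b1.
have [f1 f2] := dB e1 c1.
have [g1 g2] := dB f1 d1.
have [h1 h2] := dZ (- (1/2)) g1.
split => //; rewrite h2 g2 f2 e2 a2 b2 c2 d2 !ipE.
rewrite (mE hF 0 0).2 (mE hF 0 1).2 (mE hF 1 0).2 (mE hF 1 1).2.
rewrite (mE hG 0 0).2 (mE hG 0 1).2 (mE hG 1 0).2 (mE hG 1 1).2.
by field.
Qed.

Lemma shift_fun (V : normedModType R) (f : R -> V) c x :
  (fun h : R => h^-1 *: ((fun z => f (z + c)) (h + x) - (fun z => f (z + c)) x))
  = (fun h : R => h^-1 *: (f (h + (x + c)) - f (x + c))).
Proof. by apply/funext => h /=; rewrite addrA. Qed.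

Lemma shift_d1 (V : normedModType R) (f : R -> V) c x :
  derive1 (fun z => f (z + c)) x = derive1 f (x + c).
Proof. by rewrite /derive1 shift_fun. Qed.

Lemma shift_dble (V : normedModType R) (f : R -> V) c x :
  derivable f (x + c) 1 -> derivable (fun z => f (z + c)) x 1.
Proof.
rewrite /derivable.
have -> : (fun h : R => h^-1 *: (((fun z => f (z + c)) \o shift x) (h *: 1) - (fun z => f (z + c)) x)) = (fun h : R => h^-1 *: ((f \o shift (x + c)) (h *: 1) - f (x + c))).
  by apply/funext => h /=; rewrite addrA.
by [].
Qed.

Lemma dAff f (s k t : R) : derivable f (s + k * t) 1 ->
  derivable (fun u => f (s + k * u)) t 1 /\
  derive1 (fun u => f (s + k * u)) t = k * derive1 f (s + k * t).
Proof.
move=> hf.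
have [l1 l2] := dZ k (dI t).1; have [m1 m2] := dD (dC s t).1 l1.
rewrite l2 (dI t).2 mulr1 (dC s t).2 add0r in m2.
have -> : (fun u => f (s + k * u)) = f \o (fun u => s + k * u) by [].
split.
  apply/derivable1_diffP; apply: differentiable_comp.
    exact/derivable1_diffP.
  exact/derivable1_diffP.
by rewrite derive1_comp // m2 mulrC.
Qed.

Lemma mAff (F : R -> M2) (s k t : R) : derivable F (s + k * t) 1 ->
  derivable (fun u => F (s + k * u)) t 1 /\
  derive1 (fun u => F (s + k * u)) t = k *: derive1 F (s + k * t).
Proof.
move=> hF; apply: mB => i j.
have [a1 a2] := dAff (mE hF i j).1.
by split => //; rewrite a2 scalm2 (mE hF i j).2.
Qed.

Lemma itv_near (a b : \bar R) x : open_itv a b x ->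
  \forall z \near x, open_itv a b z.
Proof.
rewrite /open_itv /= => /andP [ha hb].
have h1 : \forall z \near x, (a < z%:E)%E.
  case: a ha => [r| |] //=.
  - by rewrite lte_fin => h; near=> z; rewrite lte_fin; near: z; exact: lt_nbhsr.
  - by move=> _; near=> z; exact: ltNyr.
have h2 : \forall z \near x, (z%:E < b)%E.
  case: b hb => [r| |] //=.
  - by rewrite lte_fin => h; near=> z; rewrite lte_fin; near: z; exact: lt_nbhsl.
  - by move=> _; near=> z; exact: ltry.
by near=> z; apply/andP; split; [near: z; exact: h1 | near: z; exact: h2].
Unshelve. all: by end_near.
Qed.
End Ana.


Section Core.
Variable R : realType.
Notation M2 := 'M[R]_2.

Lemma ipL (X P Q S Z : M2) (a b c : R) :
  ads_ip (X - (a *: P + b *: Q + c *: S)) Z =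
  ads_ip X Z - (a * ads_ip P Z + b * ads_ip Q Z + c * ads_ip S Z).
Proof. rewrite !ipE !(addm2, oppm2, scalm2); by field. Qed.

Lemma ip4 (P0 P1 P2 P3 Z : M2) (a0 a1 a2 a3 : R) :
  ads_ip (a0 *: P0 + a1 *: P1 + a2 *: P2 + a3 *: P3) Z =
  a0 * ads_ip P0 Z + a1 * ads_ip P1 Z + a2 * ads_ip P2 Z + a3 * ads_ip P3 Z.
Proof. rewrite !ipE !(addm2, oppm2, scalm2); by field. Qed.

Definition mm_def (G : nat -> R -> M2) (i j : nat) (z : R) : R :=
  ads_ip (G i z) (G j z).
Fact mm_key : unit. Proof. exact: tt. Qed.
Definition mm := locked_with mm_key mm_def.
Lemma mmE : mm = mm_def. Proof. by rewrite /mm unlock. Qed.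

Lemma core (G : nat -> R -> M2) (kap : R -> R) (N : set R) (al be : M2) (l u : R) :
  N u -> (forall y, N y -> \forall z \near y, N z) ->
  (forall y, N y -> forall n, derivable (G n) y 1 /\ derive1 (G n) y = G n.+1 y) ->
  (forall y, N y -> kap y = -(1/16) * ads_ip (G 3 y) (G 3 y)) ->
  (forall y, N y -> ads_ip (G 0 y) (G 0 y) = -1) ->
  (forall y, N y -> ads_ip (G 1 y) (G 1 y) = 0) ->
  (forall y, N y -> ads_ip (G 2 y) (G 2 y) = 4) ->
  (forall y, N y -> al *m G 0 y + G 0 y *m be =
        2 *: G 3 y - (6 * kap y + 2 * l) *: G 1 y) ->
  \tr al + \tr be = 0 ->
  derive1 (derive1 (derive1 kap)) u + 2 * l * derive1 kap u
    - 6 * kap u * derive1 kap u = 0.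
Proof.
move=> Nu Nop HG Hk H00 H11 H22 Hrel Htr.
pose m := mm G.
have Dm y : N y -> forall i j, derivable (m i j) y 1 /\
    derive1 (m i j) y = m i.+1 j y + m i j.+1 y.
  move=> Ny i j; rewrite /m mmE /mm_def -(HG y Ny i).2 -(HG y Ny j).2.
  exact: (mip (HG y Ny i).1 (HG y Ny j).1).
have M00 y : N y -> m 0 0 y = -1 by rewrite /m mmE; exact: H00.
have M11 y : N y -> m 1 1 y = 0 by rewrite /m mmE; exact: H11.
have M22 y : N y -> m 2 2 y = 4 by rewrite /m mmE; exact: H22.
have msym i j y : m i j y = m j i y by rewrite /m mmE; exact: ip_sym.
have loc (f h : R -> R) y : N y -> (forall z, N z -> f z = h z) ->
    derive1 f y = derive1 h y.
  move=> Ny e; apply: near_der1; near=> z; apply: e; near: z; exact: Nop.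
have locM (f h : R -> M2) y : N y -> (forall z, N z -> f z = h z) ->
    derive1 f y = derive1 h y.
  move=> Ny e; apply: near_der1; near=> z; apply: e; near: z; exact: Nop.
have locd (f h : R -> R) y : N y -> (forall z, N z -> f z = h z) ->
    derivable h y 1 -> derivable f y 1.
  move=> Ny e; apply: near_dble; near=> z; apply/esym/e; near: z; exact: Nop.
have cst0 (f : R -> R) c y : N y -> (forall z, N z -> f z = c) -> derive1 f y = 0.
  by move=> Ny e; rewrite (loc f (fun _ => c) y Ny e); exact: (dC c y).2.
have m01 y : N y -> m 0 1 y = 0.
  move=> Ny; have := cst0 (m 0 0) (-1) y Ny M00.
  by rewrite (Dm y Ny 0 0).2 (msym 1 0) => h; lra.
have m02 y : N y -> m 0 2 y = 0.
  move=> Ny; have := cst0 (m 0 1) 0 y Ny m01.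
  by rewrite (Dm y Ny 0 1).2 (M11 y Ny) add0r.
have m12 y : N y -> m 1 2 y = 0.
  move=> Ny; have := cst0 (m 1 1) 0 y Ny M11.
  by rewrite (Dm y Ny 1 1).2 (msym 2 1) => h; lra.
have m23 y : N y -> m 2 3 y = 0.
  move=> Ny; have := cst0 (m 2 2) 4 y Ny M22.
  by rewrite (Dm y Ny 2 2).2 (msym 3 2) => h; lra.
have m13 y : N y -> m 1 3 y = -4.
  move=> Ny; have := cst0 (m 1 2) 0 y Ny m12.
  by rewrite (Dm y Ny 1 2).2 (M22 y Ny) => h; lra.
have m03 y : N y -> m 0 3 y = 0.
  move=> Ny; have := cst0 (m 0 2) 0 y Ny m02.
  by rewrite (Dm y Ny 0 2).2 (m12 y Ny) => h; lra.
have m14 y : N y -> m 1 4 y = 0.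
  move=> Ny; have := cst0 (m 1 3) (-4) y Ny m13.
  by rewrite (Dm y Ny 1 3).2 (m23 y Ny) => h; lra.
have m04 y : N y -> m 0 4 y = 4.
  move=> Ny; have := cst0 (m 0 3) 0 y Ny m03.
  by rewrite (Dm y Ny 0 3).2 (m13 y Ny) => h; lra.
have m24 y : N y -> m 2 4 y = - m 3 3 y.
  move=> Ny; have := cst0 (m 2 3) 0 y Ny m23.
  by rewrite (Dm y Ny 2 3).2 => h; lra.
have Hk' z : N z -> kap z = -(1/16) * m 3 3 z by rewrite /m mmE; exact: Hk.
have Dk y : N y -> derivable kap y 1 /\ derive1 kap y = -(1/8) * m 3 4 y.
  move=> Ny; have [a1 a2] := dZ (-(1/16)) (Dm y Ny 3 3).1.
  split; first exact: (locd _ _ y Ny Hk' a1).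
  by rewrite (loc _ _ y Ny Hk') a2 (Dm y Ny 3 3).2 (msym 4 3); field.
have D2k y : N y -> derivable (derive1 kap) y 1 /\
    derive1 (derive1 kap) y = -(1/8) * (m 4 4 y + m 3 5 y).
  move=> Ny.
  have e : forall z, N z -> derive1 kap z = -(1/8) * m 3 4 z.
    by move=> z Nz; exact: (Dk z Nz).2.
  have [a1 a2] := dZ (-(1/8)) (Dm y Ny 3 4).1.
  split; first exact: (locd _ _ y Ny e a1).
  by rewrite (loc _ _ y Ny e) a2 (Dm y Ny 3 4).2.
have D3k y : N y -> derivable (derive1 (derive1 kap)) y 1.
  move=> Ny.
  have e : forall z, N z -> derive1 (derive1 kap) z = -(1/8) * (m 4 4 z + m 3 5 z).
    by move=> z Nz; exact: (D2k z Nz).2.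
  have [a1 a2] := dD (Dm y Ny 4 4).1 (Dm y Ny 3 5).1.
  have [b1 b2] := dZ (-(1/8)) a1.
  exact: (locd _ _ y Ny e b1).
have m34 y : N y -> m 3 4 y = -8 * derive1 kap y.
  by move=> Ny; rewrite (Dk y Ny).2; field.
have m33 y : N y -> m 3 3 y = -16 * kap y.
  by move=> Ny; rewrite (Hk' y Ny); field.
have Str y : N y -> G 4 y = (-4) *: G 0 y + (2 * derive1 kap y) *: G 1 y
    + (4 * kap y) *: G 2 y.
  move=> Ny; apply/eqP; rewrite -subr_eq0; apply/eqP.
  have mE' i j : ads_ip (G i y) (G j y) = m i j y by rewrite /m mmE.
  apply: (@nondeg4 R (G 0 y) (G 1 y) (G 2 y) (G 3 y) _ (m 3 3 y));
    rewrite ?ipL !mE' ?(msym 4 0) ?(msym 4 1) ?(msym 4 2) ?(msym 4 3) ?(msym 1 0)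
      ?(msym 2 0) ?(msym 3 0) ?(msym 2 1) ?(msym 3 1) ?(msym 3 2);
    rewrite ?(M00 y Ny) ?(m01 y Ny) ?(m02 y Ny) ?(m03 y Ny) ?(M11 y Ny)
      ?(m12 y Ny) ?(m13 y Ny) ?(M22 y Ny) ?(m23 y Ny) ?(m04 y Ny) ?(m14 y Ny)
      ?(m24 y Ny) ?(m34 y Ny) ?(m33 y Ny) //; ring.
pose K := fun X : M2 => al *m X + X *m be.
have DK y : N y -> forall n, derivable (fun z => al *m G n z + G n z *m be) y 1 /\
    derive1 (fun z => al *m G n z + G n z *m be) y = K (G n.+1 y).
  move=> Ny n.
  have [a1 a2] := mMul (mConst al y).1 (HG y Ny n).1.
  have [b1 b2] := mMul (HG y Ny n).1 (mConst be y).1.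
  have [c1 c2] := mAdd a1 b1.
  split => //; rewrite c2 a2 b2 (mConst al y).2 (mConst be y).2 (HG y Ny n).2.
  by rewrite mul0mx mulmx0 add0r addr0.
have E1 y : N y -> K (G 1 y) = (-8) *: G 0 y - (2 * derive1 kap y) *: G 1 y
    + (2 * kap y - 2 * l) *: G 2 y.
  move=> Ny; rewrite -(DK y Ny 0).2 (locM _ _ y Ny Hrel).
  have [a1 a2] := mScal (dC 2 y).1 (HG y Ny 3).1.
  have [e1 e2] := dZ 6 (Dk y Ny).1.
  have [c1 c2] := dD e1 (dC (2 * l) y).1.
  have [b1 b2] := mScal c1 (HG y Ny 1).1.
  have [d1 d2] := mSub a1 b1.
  rewrite d2 a2 b2 c2 e2 (dC 2 y).2 (dC (2 * l) y).2 !(HG y Ny _).2 (Str y Ny).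
  apply/matrixP => i j; rewrite !(addm2, subm2, oppm2, scalm2, mxE); ring.
have E2 y : N y -> K (G 2 y) = (-(8 + 2 * derive1 (derive1 kap) y)) *: G 1 y
    + (2 * kap y - 2 * l) *: G 3 y.
  move=> Ny; rewrite -(DK y Ny 1).2 (locM _ _ y Ny E1).
  have [a1 a2] := mScal (dC (-8) y).1 (HG y Ny 0).1.
  have [e1 e2] := dZ 2 (D2k y Ny).1.
  have [b1 b2] := mScal e1 (HG y Ny 1).1.
  have [f1 f2] := dZ 2 (Dk y Ny).1.
  have [g1 g2] := dB f1 (dC (2 * l) y).1.
  have [c1 c2] := mScal g1 (HG y Ny 2).1.
  have [d1 d2] := mSub a1 b1.
  have [h1 h2] := mAdd d1 c1.
  rewrite h2 d2 a2 b2 c2 e2 g2 f2 (dC (-8) y).2 (dC (2 * l) y).2 !(HG y Ny _).2.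
  rewrite (D2k y Ny).2 (Dk y Ny).2.
  apply/matrixP => i j; rewrite !(addm2, subm2, oppm2, scalm2, mxE).
  rewrite -(D2k y Ny).2 -(Dk y Ny).2; ring.
have E3 : K (G 3 u) = (- 4 * (2 * kap u - 2 * l)) *: G 0 u
   + (- 2 * derive1 (derive1 (derive1 kap)) u + 2 * derive1 kap u * (2 * kap u - 2 * l)) *: G 1 u
   + (- (8 + 2 * derive1 (derive1 kap) u) + 4 * kap u * (2 * kap u - 2 * l)) *: G 2 u
   + (2 * derive1 kap u) *: G 3 u.
  rewrite -(DK u Nu 2).2 (locM _ _ u Nu E2).
  have [e1 e2] := dZ 2 (D3k u Nu).
  have [p1 p2] := dD (dC 8 u).1 e1.
  have [q1 q2] := dN p1.
  have [b1 b2] := mScal q1 (HG u Nu 1).1.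
  have [f1 f2] := dZ 2 (Dk u Nu).1.
  have [g1 g2] := dB f1 (dC (2 * l) u).1.
  have [c1 c2] := mScal g1 (HG u Nu 3).1.
  have [h1 h2] := mAdd b1 c1.
  rewrite h2 b2 c2 q2 p2 e2 g2 f2 (dC 8 u).2 (dC (2 * l) u).2 !(HG u Nu _).2 (Str u Nu).
  move: (derive1 kap u) (derive1 (derive1 kap) u) (derive1 (derive1 (derive1 kap)) u) => a b c.
  apply/matrixP => i j; rewrite !(addm2, subm2, oppm2, scalm2, mxE); ring.
have kill := killing (G 3 u) Htr.
rewrite -/(K (G 3 u)) E3 ip4 in kill.
have mE' i j : ads_ip (G i u) (G j u) = m i j u by rewrite /m mmE.
rewrite !mE' (m03 u Nu) (m13 u Nu) (m23 u Nu) (m33 u Nu) in kill.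
move: kill; move: (derive1 kap u) (derive1 (derive1 kap) u) (derive1 (derive1 (derive1 kap)) u) (kap u) => a b c k h.
have -> : c + 2 * l * a - 6 * k * a = (-4 * (2 * k - 2 * l) * 0
   + (-2 * c + 2 * a * (2 * k - 2 * l)) * -4
   + (- (8 + 2 * b) + 4 * k * (2 * k - 2 * l)) * 0 + 2 * a * (-16 * k)) / 8.
  by field.
by rewrite h mul0r.
Unshelve. all: by end_near.
Qed.
End Core.


Section Glue.
Variable R : realType.
Notation M2 := 'M[R]_2.

Lemma linC (P Q : M2) (f : R -> M2) x : derivable f x 1 ->
  derivable (fun z => P *m f z *m Q) x 1 /\
  derive1 (fun z => P *m f z *m Q) x = P *m derive1 f x *m Q.
Proof.
move=> hf; have [a1 a2] := mMul (mConst P x).1 hf.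
have [b1 b2] := mMul a1 (mConst Q x).1.
split => //; rewrite b2 a2 (mConst P x).2 (mConst Q x).2.
by rewrite mul0mx add0r mulmx0 addr0.
Qed.

Lemma shift_dble_inv (V : normedModType R) (f : R -> V) c x :
  derivable (fun z => f (z + c)) x 1 -> derivable f (x + c) 1.
Proof.
move=> h; have := @shift_dble R V (fun z => f (z + c)) (- c) (x + c).
rewrite addrK => /(_ h).
by have -> : (fun z => f (z + - c + c)) = f by apply/funext => z; rewrite addrNK.
Qed.

Lemma S1 (F g : R -> M2) (P Q Pi Qi : M2) (cst : R) (J : set R) :
  (forall s, J s -> \forall z \near s, J z) ->
  (forall s, F s = P *m g (s + cst) *m Q) ->
  Pi *m P = 1%:M -> Q *m Qi = 1%:M ->
  (forall s, J s -> smooth_at F s) ->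
  forall n s, J s -> derivable (dn n g) (s + cst) 1 /\
    dn n F s = P *m dn n g (s + cst) *m Q.
Proof.
move=> Jop FE PiP QQi Fsm.
have back (n : nat) s : J s ->
    (forall z, J z -> dn n F z = P *m dn n g (z + cst) *m Q) ->
    derivable (dn n g) (s + cst) 1.
  move=> Js e; apply: shift_dble_inv.
  apply: (@near_dble R _ (fun z => Pi *m dn n F z *m Qi)).
    near=> z; rewrite e; last by near: z; exact: Jop.
    by rewrite !mulmxA PiP mul1mx -mulmxA QQi mulmx1.
  exact: (linC Pi Qi (Fsm s Js n)).1.
elim=> [|n IH] s Js.
  have e : forall z, J z -> dn 0 F z = P *m dn 0 g (z + cst) *m Q.
    by move=> z _; exact: FE.
  by split; [exact: (back 0%N s Js e) | exact: e].
have e : forall z, J z -> dn n.+1 F z = P *m dn n.+1 g (z + cst) *m Q.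
  move=> z Jz.
  change (derive1 (dn n F) z = P *m derive1 (dn n g) (z + cst) *m Q).
  rewrite (@near_der1 R _ _ (fun w => P *m dn n g (w + cst) *m Q)); last first.
    near=> w; apply: (IH w _).2; near: w; exact: Jop.
  have h1 := shift_dble (IH z Jz).1.
  by rewrite (linC P Q h1).2 shift_d1.
by split; [exact: (back n.+1 s Js e) | exact: e].
Unshelve. all: by end_near.
Qed.

Lemma dadj (M : R -> M2) x : derivable M x 1 -> derivable (fun z => \adj (M z)) x 1.
Proof.
move=> hM; apply/derivable_mxP => i j.
have -> : (fun z => \adj (M z) i j) = (fun z =>
  (if i == 0 then (if j == 0 then M z 1 1 else - M z 0 1)
   else (if j == 0 then - M z 1 0 else M z 0 0))).
  by apply/funext => z; rewrite adj2 mxE.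
case: (ord2 i) => ->; case: (ord2 j) => -> /=.
- exact: (mE hM 1 1).1.
- exact: (dN (mE hM 0 1).1).1.
- exact: (dN (mE hM 1 0).1).1.
- exact: (mE hM 0 0).1.
Qed.

Lemma trD (M : R -> M2) t : derivable M t 1 ->
  (\forall z \near t, \det (M z) = 1) -> \tr (\adj (M t) *m derive1 M t) = 0.
Proof.
move=> hM h1.
have h0 : derive1 (fun z => \det (M z)) t = 0.
  by rewrite (@near_der1 R R _ (fun _ : R => (1:R)) t h1); exact: (dC 1 t).2.
rewrite (_ : (fun z => \det (M z)) = (fun z => M z 0 0 * M z 1 1 - M z 0 1 * M z 1 0)) in h0;
  last by apply/funext => z; rewrite det2.
have [a1 a2] := dM (mE hM 0 0).1 (mE hM 1 1).1.
have [b1 b2] := dM (mE hM 0 1).1 (mE hM 1 0).1.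
have [c1 c2] := dB a1 b1.
rewrite c2 a2 b2 !(mE hM _ _).2 in h0.
rewrite tr2 !mulmx2E adj2 !mxE /= -h0; ring.
Qed.

Lemma itv_near_shift (a b : \bar R) x c : open_itv a b (x - c) ->
  \forall z \near x, open_itv a b (z - c).
Proof.
rewrite /open_itv /= => /andP [ha hb].
have h1 : \forall z \near x, (a < (z - c)%:E)%E.
  case: a ha => [r| |] //=.
  - rewrite lte_fin ltrBrDr => h; near=> z; rewrite lte_fin ltrBrDr.
    by near: z; exact: lt_nbhsr.
  - by move=> _; near=> z; exact: ltNyr.
have h2 : \forall z \near x, ((z - c)%:E < b)%E.
  case: b hb => [r| |] //=.
  - rewrite lte_fin ltrBlDr => h; near=> z; rewrite lte_fin ltrBlDr.
    by near: z; exact: lt_nbhsl.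
  - by move=> _; near=> z; exact: ltry.
by near=> z; apply/andP; split; [near: z; exact: h1 | near: z; exact: h2].
Unshelve. all: by end_near.
Qed.

Lemma dn_shift (f h : R -> R) (J : set R) c :
  (forall s, J s -> \forall z \near s, J z) ->
  (forall s, J s -> f s = h (s + c)) ->
  forall n s, J s -> derive1n n f s = derive1n n h (s + c).
Proof.
move=> Jop e; elim=> [|n IH] s Js; first exact: e.
change (derive1 (derive1n n f) s = derive1 (derive1n n h) (s + c)).
rewrite (@near_der1 R _ _ (fun w => derive1n n h (w + c))); last first.
  near=> w; apply: IH; near: w; exact: Jop.
by rewrite shift_d1.
Unshelve. all: by end_near.
Qed.
Lemma relalg (P Pa Q Qa A' Q' G0 G1 G3 : M2) (k c : R) :
  Pa *m P = 1%:M -> Q *m Qa = 1%:M ->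
  (A' *m G0 + P *m (k *: G1)) *m Q + P *m G0 *m Q' =
    2 *: (P *m G3 *m Q) - c *: (P *m G1 *m Q) ->
  Pa *m A' *m G0 + G0 *m (Q' *m Qa) = 2 *: G3 - (c + k) *: G1.
Proof.
move=> h1 h2 h.
have := congr1 (fun M => Pa *m M *m Qa) h => /=.
rewrite !(mulmxDr, mulmxDl, mulmxBr, mulmxBl, mulmxN, mulNmx).
do 3! rewrite -?scalemxAr -?scalemxAl.
rewrite !mulmxA h1 !mul1mx -!(mulmxA _ Q Qa) h2 !mulmx1.
move=> e; rewrite [(c + k) *: _]scalerDl opprD addrA -e addrAC addrK.
by rewrite ?mulmxA.
Qed.
End Glue.


Section Main.
Variable R : realType.
Notation M2 := 'M[R]_2.

Lemma at_time (a b c d : \bar R) (g : R -> M2) (l : R) (A B : R -> M2) t :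
  stationary_LIEN (open_itv a b) (open_itv c d) g l A B -> open_itv c d t ->
  (forall s, open_itv a b s ->
     bending (fun s => evolution g l A B s t) s = bending g (s + 2 * l * t)) /\
  (forall s, open_itv a b s -> derivable (bending g) (s + 2 * l * t) 1) /\
  (forall s, open_itv a b s ->
     derive1 (derive1 (derive1 (bending g))) (s + 2 * l * t)
     + 2 * l * derive1 (bending g) (s + 2 * l * t)
     - 6 * bending g (s + 2 * l * t) * derive1 (bending g) (s + 2 * l * t) = 0).
Proof.
move=> [Hnull [I0 [HAB [A0 [B0 [Hev Hfl]]]]]] It.
have Jop s : open_itv a b s -> \forall z \near s, open_itv a b z by exact: itv_near.
have Iop s : open_itv c d s -> \forall z \near s, open_itv c d z by exact: itv_near.
have [sA [sB [dA dB]]] := HAB t It.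
pose P := A t; pose Q := invmx (B t).
pose F := fun s => evolution g l A B s t.
have dQ : \det Q = 1 by rewrite det_inv dB invr1.
have PaP : \adj P *m P = 1%:M by rewrite mul_adj_mx dA.
have QQa : Q *m \adj Q = 1%:M by rewrite mul_mx_adj dQ.
have HS := @S1 R F g P Q (\adj P) (\adj Q) (2 * l * t) (open_itv a b) Jop
  (fun s => erefl) PaP QQa (fun s Js => (Hev t It s Js).1).
have bend s : open_itv a b s -> bending F s = bending g (s + 2 * l * t).
  by move=> Js; rewrite /bending (HS 3%N s Js).2 ip_inv.
pose N := fun y => open_itv a b (y - 2 * l * t).
have Nop y : N y -> \forall z \near y, N z by exact: itv_near_shift.
have Hsm y : N y -> forall n, derivable (dn n g) y 1 /\ derive1 (dn n g) y = dn n.+1 g y.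
  by move=> Ny n; split => //; have := (HS n (y - 2 * l * t) Ny).1; rewrite subrK.
have HFy y n : N y -> dn n F (y - 2 * l * t) = P *m dn n g y *m Q.
  by move=> Ny; rewrite (HS n _ Ny).2 subrK.
have H00 y : N y -> ads_ip (dn 0 g y) (dn 0 g y) = -1.
  move=> Ny; have := (Hev t It _ Ny).2.1; rewrite /in_AdS.
  change (\det (dn 0 F (y - 2 * l * t)) = 1 -> ads_ip (dn 0 g y) (dn 0 g y) = -1).
  by rewrite (HFy y 0%N Ny) !det_mulmx dA dQ mul1r mulr1 ipXX => ->.
have H11 y : N y -> ads_ip (dn 1 g y) (dn 1 g y) = 0.
  move=> Ny; have := (Hev t It _ Ny).2.2.1.
  change (ads_ip (dn 1 F (y - 2 * l * t)) (dn 1 F (y - 2 * l * t)) = 0 -> ads_ip (dn 1 g y) (dn 1 g y) = 0).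
  by rewrite (HFy y 1%N Ny) ip_inv.
have H22 y : N y -> ads_ip (dn 2 g y) (dn 2 g y) = 4.
  move=> Ny; have := (Hev t It _ Ny).2.2.2.2.2.
  change (ads_ip (dn 2 F (y - 2 * l * t)) (dn 2 F (y - 2 * l * t)) = 4 -> ads_ip (dn 2 g y) (dn 2 g y) = 4).
  by rewrite (HFy y 2%N Ny) ip_inv.
have hA : derivable A t 1 := sA 0%N.
have hQ : derivable (fun z => invmx (B z)) t 1.
  apply: (@near_dble R _ (fun z => \adj (B z))); last exact: dadj (sB 0%N).
  near=> z; rewrite adj_det1 //.
  have Iz : open_itv c d z by near: z; exact: Iop.
  exact: (HAB z Iz).2.2.2.
pose al := \adj P *m derive1 A t.
pose be := derive1 (fun z => invmx (B z)) t *m \adj Q.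
have Htr : \tr al + \tr be = 0.
  rewrite /al /be (mxtrace_mulC (derive1 (fun z => invmx (B z)) t)).
  rewrite (trD hA); last first.
    near=> z; have Iz : open_itv c d z by near: z; exact: Iop.
    exact: (HAB z Iz).2.2.1.
  rewrite (trD hQ) ?addr0 //.
  near=> z; have Iz : open_itv c d z by near: z; exact: Iop.
  by rewrite det_inv (HAB z Iz).2.2.2 invr1.
have Hrel y : N y -> al *m dn 0 g y + dn 0 g y *m be =
    2 *: dn 3 g y - (6 * bending g y + 2 * l) *: dn 1 g y.
  move=> Ny.
  have [_ hfl] := Hfl _ t Ny It.
  have hg : derivable g (y - 2 * l * t + 2 * l * t) 1 := (HS 0%N _ Ny).1.
  have [a1 a2] := mAff hg.
  have [b1 b2] := mMul hA a1.
  have [c1 c2] := mMul b1 hQ.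
  change (derive1 (fun z => A z *m g (y - 2 * l * t + 2 * l * z) *m invmx (B z)) t =
    lien_velocity F (y - 2 * l * t)) in hfl.
  rewrite c2 b2 a2 lienE (HS 3%N _ Ny).2 (HS 1%N _ Ny).2 bend // subrK in hfl.
  exact: (relalg PaP QQa hfl).
split; first exact: bend.
have NN s : open_itv a b s -> N (s + 2 * l * t) by move=> Js; rewrite /N addrK.
split.
  move=> s Js; have [h1 _] := mip (Hsm _ (NN s Js) 3%N).1 (Hsm _ (NN s Js) 3%N).1.
  exact: (dZ (-(1/16)) h1).1.
move=> s Js.
exact: (@core R (fun n => dn n g) (bending g) N al be l _ (NN s Js) Nop
  (fun y Ny n => Hsm y Ny n) (fun y _ => erefl) H00 H11 H22 Hrel Htr).
Unshelve. all: by end_near.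
Qed.
End Main.

Section Fin.
Variable R : realType.
Lemma aux4 (X Y Z W x y z w : R) : X = x -> Y = y -> Z = z -> W = w ->
  x + y - 6 * z * w = 0 -> X + Y - 6 * Z * W = 0.
Proof. by move=> -> -> -> ->. Qed.
Lemma aux2 (x3 x1 k l : R) : x3 + 2 * l * x1 - 6 * k * x1 = 0 ->
  2 * l * x1 + x3 - 6 * k * x1 = 0.
Proof. by rewrite [2 * l * x1 + x3]addrC. Qed.
Lemma main_aux (a b c d : \bar R) (g : R -> 'M[R]_2) (l : R)
  (A B : R -> 'M[R]_2) :
  (c < 0%:E < d)%E ->
  stationary_LIEN (open_itv a b) (open_itv c d) g l A B ->
  (forall s, open_itv a b s ->
     derive1n 3 (bending g) s + 2 * l * derive1 (bending g) s
       - 6 * bending g s * derive1 (bending g) s = 0) /\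
  (forall s t, open_itv a b s -> open_itv c d t ->
     bending (fun s => evolution g l A B s t) s = bending g (s + 2 * l * t)) /\
  (forall s t, open_itv a b s -> open_itv c d t ->
     let k := fun s t => bending (fun s => evolution g l A B s t) s in
     derive1 (fun t => k s t) t + derive1n 3 (fun s => k s t) s
       - 6 * k s t * derive1 (fun s => k s t) s = 0).
Proof.
move=> hcd hst.
have I0 : open_itv c d 0 := hcd.
split.
  move=> s Js; have [_ [_ h]] := at_time hst I0.
  by have := h s Js; rewrite mulr0 addr0.
split.
  by move=> s t Js It; exact: (at_time hst It).1 s Js.
move=> s t Js It; cbv beta zeta.
have [bnd [dk ode]] := at_time hst It.
have e1 : derive1 (fun t0 => bending (fun s0 => evolution g l A B s0 t0) s) t
    = 2 * l * derive1 (bending g) (s + 2 * l * t).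
  have nd : \forall z \near t, bending (fun s0 => evolution g l A B s0 z) s
      = bending g (s + 2 * l * z).
    near=> z; have Iz : open_itv c d z by near: z; exact: (@itv_near R c d t It).
    exact: (at_time hst Iz).1 s Js.
  apply: (eq_trans (@near_der1 R R (fun t0 => bending (fun s0 => evolution g l A B s0 t0) s)
    (fun t0 => bending g (s + 2 * l * t0)) t nd)).
  exact: (dAff (dk s Js)).2.
have e2 n : derive1n n (fun s0 => bending (fun s1 => evolution g l A B s1 t) s0) s
    = derive1n n (bending g) (s + 2 * l * t).
  exact: (dn_shift (@itv_near R a b) bnd).
apply: (aux4 e1 (e2 3%N) (bnd s Js) (e2 1%N)).
exact: (aux2 (ode s Js)).
Unshelve. all: by end_near.
Qed.
End Fin.

Unset Implicit Arguments. Set Strict Implicit. Set Printing Implicit Defensive.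

Theorem mainTheorem4 (R : realType) (a b c d : \bar R) (g : R -> 'M[R]_2) (l : R)
  (A B : R -> 'M[R]_2) :
  (c < 0%:E < d)%E ->
  stationary_LIEN (open_itv a b) (open_itv c d) g l A B ->
  (forall s, open_itv a b s ->
     derive1n 3 (bending g) s + 2 * l * derive1 (bending g) s
       - 6 * bending g s * derive1 (bending g) s = 0) /\
  (forall s t, open_itv a b s -> open_itv c d t ->
     bending (fun s => evolution g l A B s t) s = bending g (s + 2 * l * t)) /\
  (forall s t, open_itv a b s -> open_itv c d t ->
     let k := fun s t => bending (fun s => evolution g l A B s t) s in
     derive1 (fun t => k s t) t + derive1n 3 (fun s => k s t) s
       - 6 * k s t * derive1 (fun s => k s t) s = 0).
Proof. exact: (@main_aux R). Qed.
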